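(* If a history-deterministic one-counter net $\mathcal{N}=(Q,\Sigma,\Delta,q_0,F)$ satisfies the semilinear-strategy property, then there is a deterministic one-counter automaton $\mathcal{D}$ with $\mathcal{L}(\mathcal{D})=\mathcal{L}(\mathcal{N})$.
   Context: A one-counter net (OCN) is $\mathcal{N}=(Q,\Sigma,\Delta,q_0,F)$ with $Q$ finite, $\Sigma$ finite, $q_0\in Q$, $F\subseteq Q$, $\Delta\subseteq Q\times\Sigma\times\{-1,0,1\}\times Q$; configurations $(q,n)\in Q\times\mathbb{N}$, step $(q,n)\xrightarrow{a,d}(p,n+d)$ if $(q,a,d,p)\in\Delta$ and $n+d\ge0$; runs start at $(q_0,0)$ and are accepting if the last state is in $F$; $\mathcal{L}(\mathcal{N})$ is the set of words with an accepting run. Letter game: positions $(c,w)$, start $((q_0,0),\varepsilon)$; each round Adam picks $a\in\Sigma$, Eve picks a step $c\xrightarrow{a,d}c'$; if Eve has none and $wa$ is a prefix of a word of $\mathcal{L}(\mathcal{N})$ she loses; if $wa\in\mathcal{L}(\mathcal{N})$ but the state of $c'$ is not in $F$, Adam wins; otherwise continue; Eve wins infinite plays. $\mathcal{N}$ is history-deterministic if Eve wins the letter game. The game $G_1$ from $(c^E,c^A)$: each round Adam picks $a$; Eve moves her token $c^E\xrightarrow{a,d}c^E_+$; Adam moves his $c^A\xrightarrow{a,d'}c^A_+$; Adam loses if he cannot move; Eve loses if she cannot move while Adam can move and extend to an accepting run, or if $c^A_+$ has an accepting state and $c^E_+$ does not; Eve wins infinite plays. A transition $\delta=(p,a,d,p')$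 is good at $(p,k)$ if Eve wins $G_1$ from $((p,k),(p,k))$ and the step $(p,k)\xrightarrow{a,d}(p',k+d)$ is a winning move for Eve when Adam picks $a$. $\mathcal{N}$ satisfies the semilinear-strategy property if for every $\delta\in\Delta$ the set $\mathcal{S}_\delta=\{k\in\mathbb{N}:\delta\text{ is good at }(p,k)\}$ is semilinear (a finite union of arithmetic progressions, i.e. eventually periodic). A one-counter automaton is $(Q,\Sigma,\Delta,q_0,F)$ with $\Delta\subseteq Q\times\{\mathrm{zero},\neg\mathrm{zero}\}\times\Sigma\times\{-1,0,1\}\times Q$, $\mathrm{zero}$-transitions usable only at counter $0$ (update in $\{0,1\}$), $\neg\mathrm{zero}$-transitions only at positive counter; it is deterministic if $\Delta$ is a partial function from $Q\times\{\mathrm{zero},\neg\mathrm{zero}\}\times\Sigma$ to $\{-1,0,1\}\times Q$. *)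

(* Defs.v *)
From mathcomp Require Import all_boot all_algebra.
Set Implicit Arguments. Unset Strict Implicit. Unset Printing Implicit Defensive.
Import GRing.Theory Num.Theory.

Record ocn (Sigma : finType) := OCN {
  ocn_Q : finType;
  ocn_Delta : ocn_Q -> Sigma -> int -> ocn_Q -> bool;
  ocn_q0 : ocn_Q;
  ocn_F : {set ocn_Q};
  ocn_wf : forall q a d p, ocn_Delta q a d p -> d \in [:: (-1)%R; 0%R; 1%R]
}.
Arguments ocn_Delta {Sigma} o _ _ _ _.
Arguments ocn_q0 {Sigma} o.
Arguments ocn_F {Sigma} o.

Section OCN.
Variables (Sigma : finType) (N : ocn Sigma).

Definition nconf := (ocn_Q N * nat)%type.

(* (q,n) --a,d--> (p,n+d), requires (q,a,d,p) in Delta and n+d >= 0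
   (the latter is automatic since the target counter is a nat). *)
Definition nstep (c : nconf) (a : Sigma) (d : int) (c' : nconf) : Prop :=
  ocn_Delta N c.1 a d c'.1 /\ (Posz c.2 + d)%R = Posz c'.2.

Inductive nreach : nconf -> seq Sigma -> nconf -> Prop :=
| nreach0 c : nreach c [::] c
| nreachS c a d c1 w c2 : nstep c a d c1 -> nreach c1 w c2 -> nreach c (a :: w) c2.

Definition ninit : nconf := (ocn_q0 N, 0%N).

Definition nlang (w : seq Sigma) : Prop :=
  exists c, nreach ninit w c /\ c.1 \in ocn_F N.

Definition nprefix (w : seq Sigma) : Prop := exists v, nlang (w ++ v).

(* A strategy of Eve maps the word read so far (including Adam's current
   letter) to the transition (d,p) she takes, or None. Her own earlier
   choices are determined by the strategy, so this is no loss of generality. *)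
Definition lstrat := seq Sigma -> option (int * ocn_Q N).

Inductive lrun (s : lstrat) : seq Sigma -> nconf -> Prop :=
| lrun0 : lrun s [::] ninit
| lrunS w c a d p c' : lrun s w c -> s (rcons w a) = Some (d, p) ->
    nstep c a d c' -> c'.1 = p -> lrun s (rcons w a) c'.

Definition lwinning (s : lstrat) : Prop :=
  forall w c a, lrun s w c ->
    ((~ exists c', lrun s (rcons w a) c') -> ~ nprefix (rcons w a)) /\
    (forall c', lrun s (rcons w a) c' -> nlang (rcons w a) -> c'.1 \in ocn_F N).

Definition history_deterministic : Prop := exists s, lwinning s.

(* Eve's strategy sees the history (letters and Adam's transitions in the
   previous rounds) and the current letter; it returns her transition. *)
Definition gstrat := seq (Sigma * (int * ocn_Q N)) -> Sigma -> option (int * ocn_Q N).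

Inductive g1play (s : gstrat) (cE0 cA0 : nconf) :
  seq (Sigma * (int * ocn_Q N)) -> nconf -> nconf -> Prop :=
| g1play0 : g1play s cE0 cA0 [::] cE0 cA0
| g1playS h cE cA a dE cE' dA cA' :
    g1play s cE0 cA0 h cE cA ->
    s h a = Some (dE, cE'.1) -> nstep cE a dE cE' ->
    nstep cA a dA cA' ->
    g1play s cE0 cA0 (rcons h (a, (dA, cA'.1))) cE' cA'.

Definition g1move (s : gstrat) h a (cE cE' : nconf) : Prop :=
  exists dE, s h a = Some (dE, cE'.1) /\ nstep cE a dE cE'.

(* s wins G_1 from (cE0,cA0): in every reachable round,
   - if Eve cannot move, Adam cannot move and extend to an accepting run;
   - if Adam's new configuration is accepting, so is Eve's.
   (Adam loses when he cannot move; infinite plays are won by Eve.) *)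
Definition g1winning (s : gstrat) (cE0 cA0 : nconf) : Prop :=
  forall h cE cA a, g1play s cE0 cA0 h cE cA ->
    ((~ exists cE', g1move s h a cE cE') ->
       ~ exists u c, nreach cA (a :: u) c /\ c.1 \in ocn_F N) /\
    (forall cE' dA cA', g1move s h a cE cE' -> nstep cA a dA cA' ->
       cA'.1 \in ocn_F N -> cE'.1 \in ocn_F N).

Definition good (p : ocn_Q N) (a : Sigma) (d : int) (p' : ocn_Q N) (k : nat) : Prop :=
  exists s : gstrat, g1winning s (p, k) (p, k) /\
    s [::] a = Some (d, p') /\ exists k', nstep (p, k) a d (p', k').

End OCN.

(* Semilinear subsets of nat: finite unions of arithmetic progressions
   {b + per * i | i in nat} (per = 0 gives singletons). *)
Definition semilinear (S : nat -> Prop) : Prop :=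
  exists ps : seq (nat * nat),
    forall k, S k <-> exists2 bp, bp \in ps & exists i, k = (bp.1 + bp.2 * i)%N.

Definition semilinear_strategy (Sigma : finType) (N : ocn Sigma) : Prop :=
  forall p a d p', ocn_Delta N p a d p' -> semilinear (good p a d p').

(* oca_Delta q z a d p : transition (q, zero/not-zero, a, d, p),
   z = true meaning the "zero" test. *)
Record oca (Sigma : finType) := OCA {
  oca_Q : finType;
  oca_Delta : oca_Q -> bool -> Sigma -> int -> oca_Q -> bool;
  oca_q0 : oca_Q;
  oca_F : {set oca_Q};
  oca_wf : forall q z a d p, oca_Delta q z a d p ->
     d \in [:: (-1)%R; 0%R; 1%R] /\ (z -> d \in [:: 0%R; 1%R])
}.
Arguments oca_Delta {Sigma} o _ _ _ _ _.
Arguments oca_q0 {Sigma} o.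
Arguments oca_F {Sigma} o.

Section OCA.
Variables (Sigma : finType) (D : oca Sigma).

Definition dconf := (oca_Q D * nat)%type.

Definition dstep (c : dconf) (a : Sigma) (d : int) (c' : dconf) : Prop :=
  oca_Delta D c.1 (c.2 == 0%N) a d c'.1 /\ (Posz c.2 + d)%R = Posz c'.2.

Inductive dreach : dconf -> seq Sigma -> dconf -> Prop :=
| dreach0 c : dreach c [::] c
| dreachS c a d c1 w c2 : dstep c a d c1 -> dreach c1 w c2 -> dreach c (a :: w) c2.

Definition dlang (w : seq Sigma) : Prop :=
  exists c, dreach (oca_q0 D, 0%N) w c /\ c.1 \in oca_F D.

Definition oca_deterministic : Prop :=
  forall q z a d p d' p', oca_Delta D q z a d p -> oca_Delta D q z a d' p' ->
    d = d' /\ p = p'.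

End OCA.

(* Main.v *)
Require Import Defs.
From mathcomp Require Import all_boot all_algebra.
From mathcomp Require Import zify.
From Stdlib Require Import Classical ClassicalEpsilon.
Set Implicit Arguments. Unset Strict Implicit. Unset Printing Implicit Defensive.
Import GRing.Theory Num.Theory.

Lemma nstep_det (Sigma : finType) (N : ocn Sigma) (c c1 c2 : nconf N) a d :
  nstep c a d c1 -> nstep c a d c2 -> c1.1 = c2.1 -> c1 = c2.
Proof.
case: c1 c2 => [p1 k1] [p2 k2] [_ e1] [_ e2] /= E; subst p2.
by rewrite e1 in e2; case: e2 => ->.
Qed.

Lemma nreach_cat (Sigma : finType) (N : ocn Sigma) (c c1 c2 : nconf N) u v :
  nreach c u c1 -> nreach c1 v c2 -> nreach c (u ++ v) c2.
Proof.
elim=> [//|x b d y w z Hs _ IH] H; exact: (nreachS Hs (IH H)).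
Qed.

Lemma nreach_rcons (Sigma : finType) (N : ocn Sigma) (c c1 c2 : nconf N) w a d :
  nreach c w c1 -> nstep c1 a d c2 -> nreach c (rcons w a) c2.
Proof.
move=> H1 H2; rewrite -cats1; apply: (nreach_cat H1).
exact: (nreachS H2 (nreach0 _)).
Qed.

Lemma lrun_inv (Sigma : finType) (N : ocn Sigma) (s : lstrat N) w' c' :
  lrun s w' c' -> (w' = [::] /\ c' = ninit N) \/
  exists w a c d p, [/\ w' = rcons w a, lrun s w c, s (rcons w a) = Some (d, p),
     nstep c a d c' & c'.1 = p].
Proof.
case=> [|w c a d p c'' H1 H2 H3 H4]; first by left.
right; by exists w, a, c, d, p.
Qed.

Lemma lrun_det (Sigma : finType) (N : ocn Sigma) (s : lstrat N) w c1 c2 :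
  lrun s w c1 -> lrun s w c2 -> c1 = c2.
Proof.
move=> H; elim: H c2 => [|w1 c a d p c' H1 IH H2 H3 H4] c2 /lrun_inv.
- case=> [[_ ->]//|[w2 [a2 [c3 [d2 [p2 [E _ _ _ _]]]]]]].
  by move: (congr1 size E); rewrite size_rcons.
- case=> [[E _]|[w0 [a0 [c0 [d0 [p0 [E L0 S0 N0 P0]]]]]]].
  + by move: (congr1 size E); rewrite size_rcons.
  + case/rcons_inj: E => Ew Ea; subst w0 a0.
    have Ec := IH _ L0; subst c0.
    rewrite S0 in H2; case: H2 => Ed Ep; subst d0 p0.
    apply: nstep_det H3 N0 _; congruence.
Qed.

Lemma nreach_nil_inv (Sigma : finType) (N : ocn Sigma) (c c2 : nconf N) :
  nreach c [::] c2 -> c2 = c.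
Proof. by move=> H; inversion H. Qed.

Lemma nreach_cons_inv (Sigma : finType) (N : ocn Sigma) (c c2 : nconf N) a u :
  nreach c (a :: u) c2 -> exists d c1, nstep c a d c1 /\ nreach c1 u c2.
Proof. move=> H; inversion H; subst; by exists d, c1. Qed.

Definition Lfrom (Sigma : finType) (N : ocn Sigma) (c : nconf N) u :=
  exists c2, nreach c u c2 /\ c2.1 \in ocn_F N.

Definition selfwin (Sigma : finType) (N : ocn Sigma) (c : nconf N) :=
  exists s : gstrat N, g1winning s c c.

Lemma hd_selfwin (Sigma : finType) (N : ocn Sigma) :
  history_deterministic N -> selfwin (ninit N).
Proof.
case=> s W.
pose t : gstrat N := fun h a => s (rcons (map fst h) a).
have PI : forall h cE cA, g1play t (ninit N) (ninit N) h cE cA ->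
    lrun s (map fst h) cE /\ nreach (ninit N) (map fst h) cA.
  move=> h cE cA; elim=> [|h0 cE0 cA0 a dE cE' dA cA' _ [IH1 IH2] Hs HE HA].
  - by split; [exact: lrun0 | exact: nreach0].
  - rewrite map_rcons /=; split.
    + exact: (lrunS IH1 Hs HE).
    + exact: (nreach_rcons IH2 HA).
exists t => h cE cA a P; have [L R] := PI _ _ _ P.
have [W1 W2] := W _ _ a L.
split.
- move=> NM [u [c [Hr Hc]]].
  apply: W1.
  + case=> c' /lrun_inv [[E _]|[w0 [a0 [c0 [d0 [p0 [E L0 S0 N0 P0]]]]]]].
    * by move: (congr1 size E); rewrite size_rcons.
    * case/rcons_inj: E => Ew Ea; subst w0 a0.
      have Ec := lrun_det L0 L; subst c0.
      apply: NM; exists c', d0; split => //; by rewrite /t P0.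
  + exists u, c; split => //; rewrite cat_rcons; exact: nreach_cat R Hr.
- move=> cE' dA cA' [dE [Hs HE]] HA Hacc.
  apply: (W2 cE').
  + exact: (lrunS L Hs HE).
  + exists cA'; split => //; exact: nreach_rcons R HA.
Qed.

Lemma sim (Sigma : finType) (N : ocn Sigma) (s : gstrat N) c0 c0' :
  g1winning s c0 c0' -> forall u h cE cA, g1play s c0 c0' h cE cA ->
  (cA.1 \in ocn_F N -> cE.1 \in ocn_F N) -> Lfrom cA u -> Lfrom cE u.
Proof.
move=> W; elim=> [|a u IH] h cE cA P Hf [c2 [Hr Hc]].
- move/nreach_nil_inv: Hr => E; subst c2; exists cE; split; [exact: nreach0 | exact: Hf].
- case/nreach_cons_inv: Hr => dA [c1 [H3 Hr]].
  have [W1 W2] := W h cE cA a P.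
  case: (classic (exists cE', g1move s h a cE cE')) => [[cE' Hm]|NM]; last first.
    by exfalso; apply: (W1 NM); exists u, c2; split => //; exact: nreachS H3 Hr.
  case: (Hm) => dE [Hs HE].
  have P' := g1playS P Hs HE H3.
  have [|c3 [R3 F3]] := IH _ _ _ P' (W2 _ _ _ Hm H3); first by exists c2.
  by exists c3; split => //; exact: nreachS HE R3.
Qed.

Lemma good_next (Sigma : finType) (N : ocn Sigma) p a d p' (k k' : nat) :
  good p a d p' k -> nstep (p, k) a d (p', k') ->
  selfwin (N:=N) (p', k') /\ (forall u, Lfrom (N:=N) (p, k) (a :: u) -> Lfrom (N:=N) (p', k') u).
Proof.
case=> s [W [Hs [k'' Hst0]]] Hst.
have E := nstep_det Hst0 Hst erefl; case: E => E; subst k''.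
pose s' : gstrat N := fun h b => s ((a, (d, p')) :: h) b.
have PL : forall h x y, g1play s' (p', k') (p', k') h x y ->
   g1play s (p, k) (p, k) ((a, (d, p')) :: h) x y.
  move=> h x y; elim=> [|h0 cE cA b dE cE' dA cA' _ IH H1 H2 H3].
  - exact: (@g1playS _ _ s (p,k) (p,k) [::] (p,k) (p,k) a d (p',k') d (p',k') (g1play0 _ _ _) Hs Hst Hst).
  - exact: (g1playS IH H1 H2 H3).
split.
- exists s' => h cE cA b P; exact: (W _ _ _ b (PL _ _ _ P)).
- move=> u [c2 [Hr Hc]]; case/nreach_cons_inv: Hr => d1 [c1 [H3 Hr]].
  have P1 := (@g1playS _ _ s (p,k) (p,k) [::] (p,k) (p,k) a d (p',k') d1 c1 (g1play0 _ _ _) Hs Hst H3).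
  apply: (sim W P1); last by exists c2.
  have [_ W2] := W [::] (p, k) (p, k) a (g1play0 _ _ _).
  by apply: W2 H3; exists d.
Qed.

Lemma selfwin_good (Sigma : finType) (N : ocn Sigma) p (k : nat) a u :
  selfwin (N:=N) (p, k) -> Lfrom (N:=N) (p, k) (a :: u) ->
  exists d p' k', good p a d p' k /\ nstep (N:=N) (p, k) a d (p', k').
Proof.
case=> s W [c2 [Hr Hc]].
have [W1 _] := W [::] (p, k) (p, k) a (g1play0 _ _ _).
case: (classic (exists cE', g1move s [::] a (p, k) cE')) => [[[p' k'] [dE [Hs HE]]]|NM].
- exists dE, p', k'; split => //; exists s; split => //; split => //; by exists k'.
- by exfalso; apply: (W1 NM); exists u, c2.
Qed.


Definition Periodic (T P : nat) (S : nat -> Prop) :=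
  0 < P /\ forall m k, T <= k -> (S k <-> S (k + m * P)).

Lemma per_weak T P S T' Q : Periodic T P S -> T <= T' -> 0 < Q -> Periodic T' (Q * P) S.
Proof.
case=> HP H HT HQ; split; first by rewrite muln_gt0 HQ.
move=> m k Hk; rewrite mulnA; apply: H; exact: leq_trans HT Hk.
Qed.

Lemma per_ext T P S S' : (forall k, S k <-> S' k) -> Periodic T P S -> Periodic T P S'.
Proof.
move=> E [HP H]; split => // m k Hk; rewrite -!E; exact: H.
Qed.

Lemma per_or T1 P1 S1 T2 P2 S2 : Periodic T1 P1 S1 -> Periodic T2 P2 S2 ->
  Periodic (maxn T1 T2) (P1 * P2) (fun k => S1 k \/ S2 k).
Proof.
move=> H1 H2.
have [HP1 _] := H1; have [HP2 _] := H2.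
have [_ H1'] := per_weak H1 (leq_maxl T1 T2) HP2.
have [_ H2'] := per_weak H2 (leq_maxr T1 T2) HP1.
split; first by rewrite muln_gt0 HP1 HP2.
move=> m k Hk; have := H1' m k Hk; have := H2' m k Hk; rewrite (mulnC P2); tauto.
Qed.

Lemma prog_bool b per k : (exists i, k = b + per * i) <-> (b <= k) && (per %| k - b).
Proof.
split.
- case=> i ->; by rewrite leq_addr addKn dvdn_mulr.
- case/andP => Hb Hd; exists ((k - b) %/ per).
  by rewrite mulnC divnK // subnKC.
Qed.

Lemma per_prog b per : exists T P, Periodic T P (fun k => exists i, k = b + per * i).
Proof.
case: (posnP per) => [->|Hp].
- exists b.+1, 1; split => // m k Hk.
  rewrite !prog_bool !dvd0n !subn_eq0; split => /andP [H1 H2]; lia.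
- exists b, per; split => // m k Hk.
  rewrite !prog_bool Hk (leq_trans Hk (leq_addr _ _)) /= -addnBAC //.
  by rewrite dvdn_addl // dvdn_mull.
Qed.

Lemma semilinear_per (S : nat -> Prop) : Defs.semilinear S -> exists T P, Periodic T P S.
Proof.
case=> ps E.
suff [T [P H]] : exists T P, Periodic T P
   (fun k => exists2 bp, bp \in ps & exists i, k = (bp.1 + bp.2 * i)%N).
  by exists T, P; apply: per_ext H => k; rewrite E.
elim: ps {E} => [|bp ps [T [P IH]]].
- exists 0, 1; split => // m k _; split; by case.
- have [T1 [P1 H1]] := per_prog bp.1 bp.2.
  exists (maxn T1 T), (P1 * P); apply: per_ext (per_or H1 IH) => k; split.
  + case=> [H|[bp' Hin H]]; first by exists bp => //; rewrite inE eqxx.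
    by exists bp' => //; rewrite inE Hin orbT.
  + case=> bp' /[!inE] /orP [/eqP ->|Hin] H; [by left | by right; exists bp'].
Qed.

Lemma per_fam (I : finType) (G : I -> nat -> Prop) :
  (forall i, exists T P, Periodic T P (G i)) ->
  exists T P, 0 < P /\ forall i m k, T <= k -> (G i k <-> G i (k + m * P)).
Proof.
move=> H.
suff Hs : forall s : seq I, exists T P, 0 < P /\
   forall i, i \in s -> forall m k, T <= k -> (G i k <-> G i (k + m * P)).
  have [T [P [HP HT]]] := Hs (enum I).
  by exists T, P; split => // i; apply: HT; rewrite mem_enum.
elim=> [|i s [T [P [HP IH]]]]; first by exists 0, 1.
have [Ti [Pi Hi]] := H i.
have [HPi _] := Hi.
exists (maxn Ti T), (Pi * P); split; first by rewrite muln_gt0 HPi HP.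
move=> j; rewrite inE => /orP [/eqP ->|Hj] m k Hk.
- have [_ Hw] := per_weak Hi (leq_maxl Ti T) HP.
  by rewrite (mulnC Pi); apply: Hw.
- have [_ Hw] := per_weak (conj HP (IH j Hj)) (leq_maxr Ti T) HPi.
  by apply: Hw.
Qed.


Definition dec (i : 'I_3) : int := (Posz i - 1)%R.

Definition gb (Sigma : finType) (N : ocn Sigma) (p : ocn_Q N) (a : Sigma)
  (x : 'I_3 * ocn_Q N) (k : nat) : bool :=
  if excluded_middle_informative (good p a (dec x.1) x.2 k) then true else false.

Definition pickg (Sigma : finType) (N : ocn Sigma) (p : ocn_Q N) (k : nat) (a : Sigma)
  : option ('I_3 * ocn_Q N) := [pick x | gb p a x k].

Lemma gbP (Sigma : finType) (N : ocn Sigma) (p : ocn_Q N) a x k :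
  gb p a x k <-> good p a (dec x.1) x.2 k.
Proof. by rewrite /gb; case: excluded_middle_informative. Qed.

Lemma good_delta (Sigma : finType) (N : ocn Sigma) (p : ocn_Q N) a d p' k :
  good p a d p' k -> ocn_Delta N p a d p'.
Proof. by case=> s [_ [_ [k' [H _]]]]. Qed.

Lemma pickg_good (Sigma : finType) (N : ocn Sigma) (p : ocn_Q N) k a x :
  pickg p k a = Some x -> good p a (dec x.1) x.2 k.
Proof. by rewrite /pickg; case: pickP => // y Hy [<-]; apply/gbP. Qed.

Lemma pickg_some (Sigma : finType) (N : ocn Sigma) (p : ocn_Q N) a d p' k :
  good p a d p' k -> exists x, pickg p k a = Some x.
Proof.
move=> G; rewrite /pickg; case: pickP => [x _|H]; first by exists x.
exfalso.
have : exists i, dec i = d.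
  move: (ocn_wf (good_delta G)); rewrite !inE => /or3P [] /eqP Ed.
  - by exists (@Ordinal 3 0 isT).
  - by exists (@Ordinal 3 1 isT).
  - by exists (@Ordinal 3 2 isT).
case=> i Ei; have := H (i, p'); rewrite (_ : gb p a (i, p') k = true) //.
by apply/gbP; rewrite /= Ei.
Qed.

Lemma pickg_per (Sigma : finType) (N : ocn Sigma) (p : ocn_Q N) a k k' :
  (forall x : 'I_3 * ocn_Q N, good p a (dec x.1) x.2 k <-> good p a (dec x.1) x.2 k') ->
  pickg p k a = pickg p k' a.
Proof.
move=> E; apply: eq_pick => x /=; rewrite /gb.
case: excluded_middle_informative; case: excluded_middle_informative => //.
- by move=> H1 H2; exfalso; apply: H1; apply/E.
- by move=> H1 H2; exfalso; apply: H2; apply/E.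
Qed.

Lemma pickg_periodic (Sigma : finType) (N : ocn Sigma) : semilinear_strategy N ->
  exists T P, 0 < P /\ forall (p : ocn_Q N) a m k, T <= k -> pickg p (k + m * P) a = pickg p k a.
Proof.
move=> SL.
have Hfam : forall i : (ocn_Q N * Sigma * ('I_3 * ocn_Q N))%type, exists T P,
    Periodic T P (fun k => good i.1.1 i.1.2 (dec i.2.1) i.2.2 k).
  case=> [[p a] x] /=.
  case: (classic (ocn_Delta N p a (dec x.1) x.2)) => [Hd|Hd].
  + exact: semilinear_per (SL _ _ _ _ Hd).
  + exists 0, 1; split => // m k _ /=; split => /good_delta //.
have [T [P [HP H]]] := per_fam Hfam.
exists T, P; split => // p a m k Hk; symmetry; apply: pickg_per => x.
exact: (H (p, a, x) m k Hk).
Qed.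


Definition Dd (Sigma : finType) (N : ocn Sigma) (M : nat) (q : ocn_Q N * 'I_M) (z : bool)
   (a : Sigma) (dD : int) (q' : ocn_Q N * 'I_M) : bool :=
  [&& dD \in [:: (-1)%R; 0%R; 1%R], z ==> (dD != (-1)%R) &
   if pickg q.1 (if z then nat_of_ord q.2 else M + q.2) a is Some x then
     (x.2 == q'.1) && ((Posz q.2 + dec x.1)%R == (Posz q'.2 + dD * Posz M)%R)
   else false].

Lemma Dd_wf (Sigma : finType) (N : ocn Sigma) (M : nat) q z a d p :
  @Dd Sigma N M q z a d p -> d \in [:: (-1)%R; 0%R; 1%R] /\ (z -> d \in [:: 0%R; 1%R]).
Proof.
case/and3P => Hd Hz _; split => // Z; move: Hz; rewrite Z /=.
by move: Hd; rewrite !inE => /or3P [] /eqP ->.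
Qed.

Definition mkD (Sigma : finType) (N : ocn Sigma) (M : nat) (HM : 0 < M) : oca Sigma :=
  @OCA Sigma (ocn_Q N * 'I_M)%type (@Dd Sigma N M) (ocn_q0 N, Ordinal HM)
    [set q | q.1 \in ocn_F N] (@Dd_wf Sigma N M).

Definition rep (Sigma : finType) (N : ocn Sigma) (M : nat) (c : (ocn_Q N * 'I_M) * nat)
  : nconf N := (c.1.1, c.2 * M + c.1.2).

Lemma mkD_det (Sigma : finType) (N : ocn Sigma) (M : nat) (HM : 0 < M) :
  oca_deterministic (mkD N HM).
Proof.
move=> [p r] z a d [p1 r1] d' [p2 r2] /and3P [Hd _ H1] /and3P [Hd' _ H2].
move: H1 H2 => /=; case: pickg => // x /andP [/eqP E1 /eqP A1] /andP [/eqP E2 /eqP A2].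
subst p1 p2.
have [Ed Er] : d = d' /\ (r1 : nat) = r2.
  have L1 := ltn_ord r1; have L2 := ltn_ord r2.
  rewrite A2 in A1.
  move: Hd Hd' A1; rewrite !inE => /or3P [] /eqP -> /or3P [] /eqP -> A; split => //; lia.
by subst d'; split => //; congr pair; apply: val_inj.
Qed.


Lemma arith1 (M n r n' r' : nat) (dN dD : int) :
  dD \in [:: (-1)%R; 0%R; 1%R] ->
  (Posz r + dN = Posz r' + dD * Posz M)%R -> (Posz n + dD = Posz n')%R ->
  (Posz (n * M + r) + dN)%R = Posz (n' * M + r').
Proof.
rewrite !inE => /or3P [] /eqP -> E1 E2.
- have E3 : n = n'.+1 by lia.
  subst n; rewrite mulSn; lia.
- have E3 : n = n' by lia.
  subst n; lia.
- have E3 : n' = n.+1 by lia.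
  subst n'; rewrite mulSn; lia.
Qed.

Lemma arith2 (M n r k' : nat) (dN : int) : 0 < M -> r < M ->
  dN \in [:: (-1)%R; 0%R; 1%R] -> (Posz (n * M + r) + dN)%R = Posz k' ->
  exists dD (r' n' : nat), [/\ r' < M, dD \in [:: (-1)%R; 0%R; 1%R],
    (n == 0) ==> (dD != (-1)%R), (Posz r + dN = Posz r' + dD * Posz M)%R &
    (Posz n + dD = Posz n')%R /\ k' = n' * M + r'].
Proof.
move=> HM Hr; rewrite !inE => /or3P [] /eqP -> E.
- case: r Hr E => [|r] Hr E.
  + case: n E => [|n] E; first by move: E; rewrite mul0n; lia.
    exists (-1)%R, M.-1, n; rewrite mulSn in E; split; try lia; split; lia.
  + exists 0%R, r, n; split; try lia; split; lia.
- exists 0%R, r, n; split; try lia; split; lia.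
- case: (ltnP r.+1 M) => Hr1.
  + exists 0%R, r.+1, n; split; try lia; split; lia.
  + exists 1%R, 0, n.+1; rewrite mulSn; split; try lia; split; lia.
Qed.

Lemma pickg_kk (Sigma : finType) (N : ocn Sigma) (M : nat)
  (Hper : forall (p : ocn_Q N) a n r, 0 < n -> pickg p (n * M + r) a = pickg p (M + r) a)
  (p : ocn_Q N) a n r :
  pickg p (n * M + r) a = pickg p (if n == 0 then r else M + r) a.
Proof. by case: n => [|n]; [rewrite mul0n add0n | apply: Hper]. Qed.

Lemma D2N (Sigma : finType) (N : ocn Sigma) (M : nat) (HM : 0 < M)
  (Hper : forall (p : ocn_Q N) a n r, 0 < n -> pickg p (n * M + r) a = pickg p (M + r) a)
  (c c' : dconf (mkD N HM)) a d :
  dstep c a d c' -> exists dN, nstep (rep c) a dN (rep c').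
Proof.
case: c c' => [[p r] n] [[p' r'] n'] [/and3P [Hd _ Hc] Hn].
move: Hc; rewrite /= -(pickg_kk Hper).
case Ech: pickg => [x|//] /andP [/eqP Ex /eqP Ea].
have G := pickg_good Ech; have Del := good_delta G.
exists (dec x.1); split; first by rewrite /= -Ex.
exact: arith1 Hd Ea Hn.
Qed.

Lemma D2N_reach (Sigma : finType) (N : ocn Sigma) (M : nat) (HM : 0 < M)
  (Hper : forall (p : ocn_Q N) a n r, 0 < n -> pickg p (n * M + r) a = pickg p (M + r) a)
  (c c2 : dconf (mkD N HM)) w :
  dreach c w c2 -> nreach (rep c) w (rep c2).
Proof.
elim=> [c0|c0 a d c1 w0 c3 Hs _ IH]; first exact: nreach0.
have [dN HN] := D2N Hper Hs; exact: nreachS HN IH.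
Qed.

Lemma N2D_step (Sigma : finType) (N : ocn Sigma) (M : nat) (HM : 0 < M)
  (Hper : forall (p : ocn_Q N) a n r, 0 < n -> pickg p (n * M + r) a = pickg p (M + r) a)
  (c : dconf (mkD N HM)) a x k' :
  pickg c.1.1 (c.2 * M + c.1.2) a = Some x ->
  nstep (rep c) a (dec x.1) (x.2, k') ->
  exists dD (c' : dconf (mkD N HM)), dstep c a dD c' /\ rep c' = (x.2, k').
Proof.
case: c => [[p r] n] /= Ech [Hdel Hk] /=.
have Hd : dec x.1 \in [:: (-1)%R; 0%R; 1%R] := ocn_wf Hdel.
have [dD [r' [n' [Hr' HdD Hz Ea [Hn Ek]]]]] := arith2 HM (ltn_ord r) Hd Hk.
exists dD, ((x.2, Ordinal Hr'), n'); split; last by move: Ek => /= ->.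
split => //=.
move: Hz => /= Hz; rewrite /Dd /= HdD Hz /= -(pickg_kk Hper) Ech eqxx /=; exact/eqP.
Qed.

Lemma N2D (Sigma : finType) (N : ocn Sigma) (M : nat) (HM : 0 < M)
  (Hper : forall (p : ocn_Q N) a n r, 0 < n -> pickg p (n * M + r) a = pickg p (M + r) a)
  u : forall c : dconf (mkD N HM), selfwin (rep c) -> Lfrom (rep c) u ->
  exists c2, dreach c u c2 /\ c2.1 \in oca_F (mkD N HM).
Proof.
elim: u => [|a u IH] c Hs Hl.
- case: Hl => c2 [/nreach_nil_inv E Hc]; subst c2.
  exists c; split; [exact: dreach0 | by rewrite inE].
- case: c Hs Hl => [[p r] n] Hs Hl.
  have [d [p' [k' [G St]]]] := selfwin_good Hs Hl.
  have [x Ex] := pickg_some G.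
  have Gx := pickg_good Ex.
  case: (Gx) => s [_ [_ [k'' Hst]]].
  have [Sw Lf] := good_next Gx Hst.
  have [dD [c' [Ds Rc]]] := N2D_step Hper (c := ((p, r), n)) Ex Hst.
  have Sw' : selfwin (rep c') by rewrite Rc.
  have Lf' : Lfrom (rep c') u by rewrite Rc; exact: Lf.
  have [c2 [Dr Fc]] := IH c' Sw' Lf'.
  by exists c2; split => //; exact: dreachS Ds Dr.
Qed.


Theorem lemma6 (Sigma : finType) (N : ocn Sigma) :
  history_deterministic N -> semilinear_strategy N ->
  exists D : oca Sigma, oca_deterministic D /\ (forall w, dlang D w <-> nlang N w).
Proof.
move=> HD SL.
have [T [P [HP Hp]]] := pickg_periodic SL.
have HM : 0 < P * T.+1 by rewrite muln_gt0 HP.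
have Hper : forall (p : ocn_Q N) a n r, 0 < n ->
    pickg p (n * (P * T.+1) + r) a = pickg p (P * T.+1 + r) a.
  move=> p a [//|n0] r _.
  have -> : n0.+1 * (P * T.+1) + r = P * T.+1 + r + (n0 * T.+1) * P.
    rewrite mulSn; nia.
  apply: Hp; nia.
exists (mkD N HM); split; first exact: mkD_det.
move=> w; split.
- case=> c2 [Dr Fc]; have R := D2N_reach Hper Dr.
  exists (rep c2); split; first exact: R.
  by move: Fc; rewrite inE.
- move=> Hl.
  have [c2 [Dr Fc]] := N2D Hper (c := ((ocn_q0 N, Ordinal HM), 0)) (hd_selfwin HD) Hl.
  by exists c2.
Qed.
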